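(* Let $\varepsilon$ be a locally variational source form on $\mathbb{R}\times T^2M$. Then the local expressions $$\omega=\tfrac12\,D(x,y,0,0)\,dx\wedge dy$$ and $$\kappa=-\Big(\int_0^{\dot x}B_{xx}(x,y,\nu,\dot y)\,d\nu+\int_0^{\dot y}B_{xy}(x,y,0,\sigma)\,d\sigma\Big)dx-\Big(\int_0^{\dot x}B_{xy}(x,y,\nu,\dot y)\,d\nu+\int_0^{\dot y}B_{yy}(x,y,0,\sigma)\,d\sigma\Big)dy,$$ defined in each chart, are independent of the chart, i.e. they define a global $2$-form $\omega$ on $M$ (hence on $T^1M$) and a global $1$-form $\kappa$ on $T^1M$. Consequently $\alpha'-\omega=d\kappa$ holds globally on $T^1M$, where $\alpha'=\tfrac12 D\,dx\wedge dy+(B_{xx}dx+B_{xy}dy)\wedge d\dot x+(B_{xy}dx+B_{yy}dy)\wedge d\dot y$.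
   Context: Setting: $M$ is a smooth connected $2$-manifold, $Y=\mathbb{R}\times M$; $J^{1}Y\cong\mathbb{R}\times T^{1}M$, $J^{2}Y\cong\mathbb{R}\times T^{2}M$, with chart coordinates $(t,x,y,\dot x,\dot y)$, $(t,x,y,\dot x,\dot y,\ddot x,\ddot y)$ induced by charts $(x,y)$ on $M$ (tangent coordinates $\dot x,\dot y$ transform linearly under chart changes). Contact forms $\omega^x=dx-\dot x dt$, $\omega^y=dy-\dot y dt$. A source form $\varepsilon=(\varepsilon_x\omega^x+\varepsilon_y\omega^y)\wedge dt$ on $\mathbb{R}\times T^2M$ is locally variational iff locally it is the Euler–Lagrange form of a first-order Lagrangian; equivalently in every chart $\varepsilon_x=A_x+B_{xx}\ddot x+B_{xy}\ddot y$, $\varepsilon_y=A_y+B_{xy}\ddot x+B_{yy}\ddot y$ with $A_x,A_y,B_{xx},B_{xy},B_{yy}$ functions of $(x,y,\dot x,\dot y)$ satisfying the Helmholtz conditions: $\partial B_{xx}/\partial\dot y=\partial B_{xy}/\partial\dot x$, $\partial B_{yy}/\partial\dot x=\partial B_{xy}/\partial\dot y$, $\partial A_x/\partial\dot x-\dot x\,\partial B_{xx}/\partial x-\dot y\,\partial B_{xx}/\partial y=0$, $\partial A_y/\partial\dot y-\dot x\,\partial B_{yy}/\partial x-\dot y\,\partial B_{yy}/\partial y=0$, $\partial A_x/\partial\dot y+\partial A_y/\partial\dot x-2\dot x\,\partial B_{xy}/\partial x-2\dot y\,\partial B_{xy}/\partial y=0$, $\partial A_x/\partial y-\partial A_y/\partial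 x-\frac12\dot x\,\partial_x D-\frac12\dot y\,\partial_y D=0$, where $D=\partial A_x/\partial\dot y-\partial A_y/\partial\dot x$. *)

(* Defs.v *)
From Stdlib Require Import Reals.
From Coquelicot Require Import Coquelicot.
Open Scope R_scope.

(* A chart of M is modelled by coordinates (x,y); a chart change between the
   overlap images U (old coordinates) and V (new coordinates) is a
   diffeomorphism (p1,p2) : U -> V with inverse (q1,q2). Functions on T^1M
   in chart coordinates are functions of (x, y, xd, yd). *)

Definition d_x (f : R -> R -> R -> R -> R) x y a b := Derive (fun s => f s y a b) x.
Definition d_y (f : R -> R -> R -> R -> R) x y a b := Derive (fun s => f x s a b) y.
Definition d_xd (f : R -> R -> R -> R -> R) x y a b := Derive (fun s => f x y s b) a.
Definition d_yd (f : R -> R -> R -> R -> R) x y a b := Derive (fun s => f x y a s) b.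

Definition d2_x (g : R -> R -> R) x y := Derive (fun s => g s y) x.
Definition d2_y (g : R -> R -> R) x y := Derive (fun s => g x s) y.

Definition open2 (U : R -> R -> Prop) : Prop :=
  forall x y, U x y -> exists e : R, 0 < e /\
    forall x' y', Rabs (x' - x) < e -> Rabs (y' - y) < e -> U x' y'.

CoInductive smooth2_on (U : R -> R -> Prop) (g : R -> R -> R) : Prop :=
  Smooth2 :
    (forall x y, U x y -> continuous (fun p : R * R => g (fst p) (snd p)) (x, y)) ->
    (forall x y, U x y -> ex_derive (fun s => g s y) x /\ ex_derive (fun s => g x s) y) ->
    smooth2_on U (d2_x g) -> smooth2_on U (d2_y g) -> smooth2_on U g.

CoInductive smooth4_on (U : R -> R -> Prop) (f : R -> R -> R -> R -> R) : Prop :=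
  Smooth4 :
    (forall x y a b, U x y ->
       continuous (fun p : R * R * R * R =>
         f (fst (fst (fst p))) (snd (fst (fst p))) (snd (fst p)) (snd p)) (x, y, a, b)) ->
    (forall x y a b, U x y ->
       ex_derive (fun s => f s y a b) x /\ ex_derive (fun s => f x s a b) y /\
       ex_derive (fun s => f x y s b) a /\ ex_derive (fun s => f x y a s) b) ->
    smooth4_on U (d_x f) -> smooth4_on U (d_y f) ->
    smooth4_on U (d_xd f) -> smooth4_on U (d_yd f) -> smooth4_on U f.

Definition is_diffeo (U V : R -> R -> Prop) (p1 p2 q1 q2 : R -> R -> R) : Prop :=
  open2 U /\ open2 V /\
  smooth2_on U p1 /\ smooth2_on U p2 /\ smooth2_on V q1 /\ smooth2_on V q2 /\
  (forall x y, U x y ->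
     V (p1 x y) (p2 x y) /\ q1 (p1 x y) (p2 x y) = x /\ q2 (p1 x y) (p2 x y) = y) /\
  (forall X Y, V X Y ->
     U (q1 X Y) (q2 X Y) /\ p1 (q1 X Y) (q2 X Y) = X /\ p2 (q1 X Y) (q2 X Y) = Y).

Record coeffs := Coeffs {
  Ax : R -> R -> R -> R -> R;
  Ay : R -> R -> R -> R -> R;
  Bxx : R -> R -> R -> R -> R;
  Bxy : R -> R -> R -> R -> R;
  Byy : R -> R -> R -> R -> R }.

Definition eps_x (c : coeffs) x y a b a2 b2 :=
  Ax c x y a b + Bxx c x y a b * a2 + Bxy c x y a b * b2.
Definition eps_y (c : coeffs) x y a b a2 b2 :=
  Ay c x y a b + Bxy c x y a b * a2 + Byy c x y a b * b2.

Definition smooth_coeffs (U : R -> R -> Prop) (c : coeffs) : Prop :=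
  smooth4_on U (Ax c) /\ smooth4_on U (Ay c) /\ smooth4_on U (Bxx c) /\
  smooth4_on U (Bxy c) /\ smooth4_on U (Byy c).

Definition Dfun (c : coeffs) x y a b := d_yd (Ax c) x y a b - d_xd (Ay c) x y a b.

Definition helmholtz (U : R -> R -> Prop) (c : coeffs) : Prop :=
  forall x y a b, U x y ->
    d_yd (Bxx c) x y a b = d_xd (Bxy c) x y a b /\
    d_xd (Byy c) x y a b = d_yd (Bxy c) x y a b /\
    d_xd (Ax c) x y a b - a * d_x (Bxx c) x y a b - b * d_y (Bxx c) x y a b = 0 /\
    d_yd (Ay c) x y a b - a * d_x (Byy c) x y a b - b * d_y (Byy c) x y a b = 0 /\
    d_yd (Ax c) x y a b + d_xd (Ay c) x y a b
      - 2 * a * d_x (Bxy c) x y a b - 2 * b * d_y (Bxy c) x y a b = 0 /\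
    d_y (Ax c) x y a b - d_x (Ay c) x y a b
      - / 2 * a * d_x (Dfun c) x y a b - / 2 * b * d_y (Dfun c) x y a b = 0.

Definition loc_variational (U : R -> R -> Prop) (c : coeffs) : Prop :=
  smooth_coeffs U c /\ helmholtz U c.

(* kappa = - Kx dx - Ky dy *)
Definition Kx (c : coeffs) x y a b :=
  RInt (fun nu => Bxx c x y nu b) 0 a + RInt (fun s => Bxy c x y 0 s) 0 b.
Definition Ky (c : coeffs) x y a b :=
  RInt (fun nu => Bxy c x y nu b) 0 a + RInt (fun s => Byy c x y 0 s) 0 b.

(* The same source form eps expressed in chart 1 (coefficients c1, domain U)
   and chart 2 (coefficients c2, domain V), related by the chart change
   (X,Y) = (p1,p2)(x,y), with induced change of jet coordinates
   Xd = J (xd,yd), Xdd = J (xdd,ydd) + second-derivative terms, and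
   omega^X = J11 omega^x + J12 omega^y, omega^Y = J21 omega^x + J22 omega^y. *)
Definition same_source_form (U : R -> R -> Prop) (p1 p2 : R -> R -> R)
    (c1 c2 : coeffs) : Prop :=
  forall x y a b a2 b2, U x y ->
    let X := p1 x y in let Y := p2 x y in
    let J11 := d2_x p1 x y in let J12 := d2_y p1 x y in
    let J21 := d2_x p2 x y in let J22 := d2_y p2 x y in
    let Xd := J11 * a + J12 * b in let Yd := J21 * a + J22 * b in
    let Xdd := J11 * a2 + J12 * b2
       + d2_x (d2_x p1) x y * a * a + d2_y (d2_x p1) x y * a * b
       + d2_x (d2_y p1) x y * a * b + d2_y (d2_y p1) x y * b * b in
    let Ydd := J21 * a2 + J22 * b2
       + d2_x (d2_x p2) x y * a * a + d2_y (d2_x p2) x y * a * b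
       + d2_x (d2_y p2) x y * a * b + d2_y (d2_y p2) x y * b * b in
    eps_x c1 x y a b a2 b2 =
      eps_x c2 X Y Xd Yd Xdd Ydd * J11 + eps_y c2 X Y Xd Yd Xdd Ydd * J21 /\
    eps_y c1 x y a b a2 b2 =
      eps_x c2 X Y Xd Yd Xdd Ydd * J12 + eps_y c2 X Y Xd Yd Xdd Ydd * J22.

(* Main.v *)
Require Import Defs.
From Stdlib Require Import Reals Lra.
From Coquelicot Require Import Coquelicot.
Open Scope R_scope.

Lemma pair_cont {T U V : UniformSpace} (f : T -> U) (g : T -> V) t :
  continuous f t -> continuous g t -> continuous (fun z => (f z, g z)) t.
Proof.
  intros Hf Hg.
  apply (continuous_comp_2 f g (fun a b => (a,b))); auto.
  apply continuous_ext with (f := fun x => x). intros [a b]; reflexivity. apply continuous_id.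
Qed.

Lemma cont4 {T : UniformSpace} (f : R -> R -> R -> R -> R) (g1 g2 g3 g4 : T -> R) t :
  continuous g1 t -> continuous g2 t -> continuous g3 t -> continuous g4 t ->
  continuous (fun p : R * R * R * R =>
         f (fst (fst (fst p))) (snd (fst (fst p))) (snd (fst p)) (snd p)) (g1 t, g2 t, g3 t, g4 t) ->
  continuous (fun z => f (g1 z) (g2 z) (g3 z) (g4 z)) t.
Proof.
  intros H1 H2 H3 H4 H.
  apply (continuous_comp (fun z => (g1 z, g2 z, g3 z, g4 z)) (fun p : R * R * R * R =>
         f (fst (fst (fst p))) (snd (fst (fst p))) (snd (fst p)) (snd p))); auto.
  repeat apply pair_cont; auto.
Qed.

Lemma sm_cont W f x y a b : smooth4_on W f -> W x y ->
  continuous (fun p : R * R * R * R =>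
         f (fst (fst (fst p))) (snd (fst (fst p))) (snd (fst p)) (snd p)) (x, y, a, b).
Proof. intros [H _ _ _ _ _] Hw; auto. Qed.

Lemma sm_ex W f x y a b : smooth4_on W f -> W x y ->
       ex_derive (fun s => f s y a b) x /\ ex_derive (fun s => f x s a b) y /\
       ex_derive (fun s => f x y s b) a /\ ex_derive (fun s => f x y a s) b.
Proof. intros [_ H _ _ _ _] Hw; auto. Qed.

Lemma sm_dx W f : smooth4_on W f -> smooth4_on W (d_x f). Proof. intros [_ _ H _ _ _]; auto. Qed.
Lemma sm_dy W f : smooth4_on W f -> smooth4_on W (d_y f). Proof. intros [_ _ _ H _ _]; auto. Qed.
Lemma sm_da W f : smooth4_on W f -> smooth4_on W (d_xd f). Proof. intros [_ _ _ _ H _]; auto. Qed.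
Lemma sm_db W f : smooth4_on W f -> smooth4_on W (d_yd f). Proof. intros [_ _ _ _ _ H]; auto. Qed.

Ltac ccont := first [ apply continuous_fst | apply continuous_snd | apply continuous_const | apply continuous_id ].

Lemma c2d (g : R * R -> R) u v : continuous g (u, v) -> continuity_2d_pt (fun a b => g (a, b)) u v.
Proof.
  intros H. apply continuity_2d_pt_filterlim.
  eapply filterlim_ext; [| exact H]. intros [p q]; reflexivity.
Qed.

Lemma cont_ab W f x y a b : smooth4_on W f -> W x y -> continuity_2d_pt (fun u v => f x y u v) a b.
Proof.
  intros Hs Hw. apply (c2d (fun z => f x y (fst z) (snd z))).
  apply (cont4 f (fun _ => x) (fun _ => y) fst snd); try ccont. apply (sm_cont W); auto.
Qed.

Lemma cont_xa W f x y a b : smooth4_on W f -> W x y -> continuity_2d_pt (fun u v => f u y v b) x a.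
Proof.
  intros Hs Hw. apply (c2d (fun z => f (fst z) y (snd z) b)).
  apply (cont4 f fst (fun _ => y) snd (fun _ => b)); try ccont. apply (sm_cont W); auto.
Qed.
Lemma cont_xb W f x y a b : smooth4_on W f -> W x y -> continuity_2d_pt (fun u v => f u y a v) x b.
Proof.
  intros Hs Hw. apply (c2d (fun z => f (fst z) y a (snd z))).
  apply (cont4 f fst (fun _ => y) (fun _ => a) snd); try ccont. apply (sm_cont W); auto.
Qed.
Lemma cont_ya W f x y a b : smooth4_on W f -> W x y -> continuity_2d_pt (fun u v => f x u v b) y a.
Proof.
  intros Hs Hw. apply (c2d (fun z => f x (fst z) (snd z) b)).
  apply (cont4 f (fun _ => x) fst snd (fun _ => b)); try ccont. apply (sm_cont W); auto.
Qed.
Lemma cont_yb W f x y a b : smooth4_on W f -> W x y -> continuity_2d_pt (fun u v => f x u a v) y b.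
Proof.
  intros Hs Hw. apply (c2d (fun z => f x (fst z) a (snd z))).
  apply (cont4 f (fun _ => x) fst (fun _ => a) snd); try ccont. apply (sm_cont W); auto.
Qed.
Lemma cont_a W f x y a b : smooth4_on W f -> W x y -> continuous (fun t => f x y t b) a.
Proof.
  intros Hs Hw. apply (cont4 f (fun _ => x) (fun _ => y) (fun t => t) (fun _ => b)); try ccont. apply (sm_cont W); auto.
Qed.
Lemma cont_b W f x y a b : smooth4_on W f -> W x y -> continuous (fun t => f x y a t) b.
Proof.
  intros Hs Hw. apply (cont4 f (fun _ => x) (fun _ => y) (fun _ => a) (fun t => t)); try ccont. apply (sm_cont W); auto.
Qed.

Lemma ball_R (x u e : R) : ball x e u -> Rabs (u - x) < e.
Proof. intros H. exact H. Qed.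
Lemma R_ball (x u e : R) : Rabs (u - x) < e -> ball x e u.
Proof. intros H. exact H. Qed.

Lemma open_x W x y : open2 W -> W x y -> exists e, 0 < e /\ forall u, Rabs (u - x) < e -> W u y.
Proof. intros Ho Hw. destruct (Ho x y Hw) as [e [He H]]. exists e; split; auto.
  intros u Hu; apply H; auto. rewrite Rminus_diag, Rabs_R0; auto. Qed.
Lemma open_y W x y : open2 W -> W x y -> exists e, 0 < e /\ forall u, Rabs (u - y) < e -> W x u.
Proof. intros Ho Hw. destruct (Ho x y Hw) as [e [He H]]. exists e; split; auto.
  intros u Hu; apply H; auto. rewrite Rminus_diag, Rabs_R0; auto. Qed.

Lemma loc_x W x y : open2 W -> W x y -> locally x (fun u => W u y).
Proof. intros Ho Hw. destruct (open_x W x y Ho Hw) as [e [He H]].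
  exists (mkposreal e He). intros u Hu. apply H. apply ball_R in Hu. exact Hu. Qed.
Lemma loc_y W x y : open2 W -> W x y -> locally y (fun u => W x u).
Proof. intros Ho Hw. destruct (open_y W x y Ho Hw) as [e [He H]].
  exists (mkposreal e He). intros u Hu. apply H. apply ball_R in Hu. exact Hu. Qed.

Lemma sw_ab W f x y a b : smooth4_on W f -> W x y ->
  d_xd (d_yd f) x y a b = d_yd (d_xd f) x y a b.
Proof.
  intros Hs Hw.
  apply (Schwarz (fun u v => f x y u v) a b).
  - exists (mkposreal 1 Rlt_0_1). intros u v _ _.
    destruct (sm_ex W f x y u v Hs Hw) as [_ [_ [H1 H2]]].
    destruct (sm_ex W _ x y u v (sm_db W f Hs) Hw) as [_ [_ [H3 _]]].
    destruct (sm_ex W _ x y u v (sm_da W f Hs) Hw) as [_ [_ [_ H4]]].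
    repeat split; auto.
  - apply (cont_ab W (d_xd (d_yd f))); auto. apply sm_da, sm_db; auto.
  - apply (cont_ab W (d_yd (d_xd f))); auto. apply sm_db, sm_da; auto.
Qed.

Lemma sw_xa W f x y a b : open2 W -> smooth4_on W f -> W x y ->
  d_x (d_xd f) x y a b = d_xd (d_x f) x y a b.
Proof.
  intros Ho Hs Hw. destruct (open_x W x y Ho Hw) as [e [He HW]].
  apply (Schwarz (fun u v => f u y v b) x a).
  - exists (mkposreal e He). intros u v Hu _. simpl in Hu. specialize (HW u Hu).
    destruct (sm_ex W f u y v b Hs HW) as [H1 [_ [H2 _]]].
    destruct (sm_ex W _ u y v b (sm_da W f Hs) HW) as [H3 _].
    destruct (sm_ex W _ u y v b (sm_dx W f Hs) HW) as [_ [_ [H4 _]]].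
    repeat split; auto.
  - apply (cont_xa W (d_x (d_xd f))); auto. apply sm_dx, sm_da; auto.
  - apply (cont_xa W (d_xd (d_x f))); auto. apply sm_da, sm_dx; auto.
Qed.

Lemma sw_xb W f x y a b : open2 W -> smooth4_on W f -> W x y ->
  d_x (d_yd f) x y a b = d_yd (d_x f) x y a b.
Proof.
  intros Ho Hs Hw. destruct (open_x W x y Ho Hw) as [e [He HW]].
  apply (Schwarz (fun u v => f u y a v) x b).
  - exists (mkposreal e He). intros u v Hu _. simpl in Hu. specialize (HW u Hu).
    destruct (sm_ex W f u y a v Hs HW) as [H1 [_ [_ H2]]].
    destruct (sm_ex W _ u y a v (sm_db W f Hs) HW) as [H3 _].
    destruct (sm_ex W _ u y a v (sm_dx W f Hs) HW) as [_ [_ [_ H4]]].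
    repeat split; auto.
  - apply (cont_xb W (d_x (d_yd f))); auto. apply sm_dx, sm_db; auto.
  - apply (cont_xb W (d_yd (d_x f))); auto. apply sm_db, sm_dx; auto.
Qed.

Lemma sw_ya W f x y a b : open2 W -> smooth4_on W f -> W x y ->
  d_y (d_xd f) x y a b = d_xd (d_y f) x y a b.
Proof.
  intros Ho Hs Hw. destruct (open_y W x y Ho Hw) as [e [He HW]].
  apply (Schwarz (fun u v => f x u v b) y a).
  - exists (mkposreal e He). intros u v Hu _. simpl in Hu. specialize (HW u Hu).
    destruct (sm_ex W f x u v b Hs HW) as [_ [H1 [H2 _]]].
    destruct (sm_ex W _ x u v b (sm_da W f Hs) HW) as [_ [H3 _]].
    destruct (sm_ex W _ x u v b (sm_dy W f Hs) HW) as [_ [_ [H4 _]]].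
    repeat split; auto.
  - apply (cont_ya W (d_y (d_xd f))); auto. apply sm_dy, sm_da; auto.
  - apply (cont_ya W (d_xd (d_y f))); auto. apply sm_da, sm_dy; auto.
Qed.

Lemma sw_yb W f x y a b : open2 W -> smooth4_on W f -> W x y ->
  d_y (d_yd f) x y a b = d_yd (d_y f) x y a b.
Proof.
  intros Ho Hs Hw. destruct (open_y W x y Ho Hw) as [e [He HW]].
  apply (Schwarz (fun u v => f x u a v) y b).
  - exists (mkposreal e He). intros u v Hu _. simpl in Hu. specialize (HW u Hu).
    destruct (sm_ex W f x u a v Hs HW) as [_ [H1 [_ H2]]].
    destruct (sm_ex W _ x u a v (sm_db W f Hs) HW) as [_ [H3 _]].
    destruct (sm_ex W _ x u a v (sm_dy W f Hs) HW) as [_ [_ [_ H4]]].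
    repeat split; auto.
  - apply (cont_yb W (d_y (d_yd f))); auto. apply sm_dy, sm_db; auto.
  - apply (cont_yb W (d_yd (d_y f))); auto. apply sm_db, sm_dy; auto.
Qed.

Lemma ftc (g : R -> R) b : (forall t, continuous g t) -> is_derive (fun s => RInt g 0 s) b (g b).
Proof.
  intros Hc. apply (is_derive_RInt g (fun s => RInt g 0 s) 0 b).
  - apply filter_forall. intros s. apply (RInt_correct g 0 s). apply ex_RInt_continuous. intros; auto.
  - auto.
Qed.

Lemma param (h : R -> R -> R) (P : R -> Prop) p lo hi :
 locally p P ->
 (forall u t, P u -> ex_derive (fun z => h z t) u) ->
 (forall u t, P u -> continuous (h u) t) ->
 (forall t, continuity_2d_pt (fun u v => Derive (fun z => h z v) u) p t) ->
 is_derive (fun u => RInt (h u) lo hi) p (RInt (fun t => Derive (fun z => h z t) p) lo hi).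
Proof.
  intros HP Hd Hc Hc2.
  apply (is_derive_RInt_param h lo hi p).
  - eapply filter_imp; [| exact HP]. intros u Hu t _. apply Hd; auto.
  - intros; auto.
  - eapply filter_imp; [| exact HP]. intros u Hu.
    apply (@ex_RInt_continuous R_CompleteNormedModule). intros; apply Hc; auto.
Qed.

Lemma cont_ba W f x y a b : smooth4_on W f -> W x y -> continuity_2d_pt (fun u v => f x y v u) b a.
Proof.
  intros Hs Hw. apply (c2d (fun z => f x y (snd z) (fst z))).
  apply (cont4 f (fun _ => x) (fun _ => y) snd fst); try ccont. apply (sm_cont W); auto.
Qed.

Lemma RInt_db W f g x y a b : smooth4_on W f -> smooth4_on W g -> W x y ->
  (forall nu, d_yd f x y nu b = d_xd g x y nu b) ->
  is_derive (fun s => RInt (fun nu => f x y nu s) 0 a) b (g x y a b - g x y 0 b).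
Proof.
  intros Hf Hg Hw He.
  assert (Hd := param (fun z t => f x y t z) (fun _ => True) b 0 a).
  simpl in Hd.
  replace (g x y a b - g x y 0 b) with (RInt (fun t => Derive (fun z => f x y t z) b) 0 a).
  - apply Hd.
    + apply filter_forall; auto.
    + intros u t _. apply (sm_ex W f x y t u Hf Hw).
    + intros u t _. apply (cont_a W f x y t u Hf Hw).
    + intros t. apply (cont_ba W (d_yd f)); auto. apply sm_db; auto.
  - transitivity (RInt (Derive (fun nu => g x y nu b)) 0 a).
    + apply RInt_ext. intros t _. apply He.
    + apply (RInt_Derive (fun nu => g x y nu b)).
      * intros t _. apply (sm_ex W g x y t b Hg Hw).
      * intros t _. apply (cont_a W (d_xd g)); auto. apply sm_da; auto.
Qed.

Lemma isd_plus (f g : R -> R) x df dg : is_derive f x df -> is_derive g x dg ->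
  is_derive (fun t => f t + g t) x (df + dg).
Proof. intros H1 H2. exact (@is_derive_plus R_AbsRing R_NormedModule f g x df dg H1 H2). Qed.
Lemma isd_minus (f g : R -> R) x df dg : is_derive f x df -> is_derive g x dg ->
  is_derive (fun t => f t - g t) x (df - dg).
Proof. intros H1 H2. exact (@is_derive_minus R_AbsRing R_NormedModule f g x df dg H1 H2). Qed.
Lemma isd_mult (f g : R -> R) x df dg : is_derive f x df -> is_derive g x dg ->
  is_derive (fun t => f t * g t) x (df * g x + f x * dg).
Proof. intros H1 H2. exact (@is_derive_mult R_AbsRing f g x df dg H1 H2 Rmult_comm). Qed.
Lemma isd_const (k : R) x : is_derive (fun _ : R => k) x 0.
Proof. exact (@is_derive_const R_AbsRing R_NormedModule k x). Qed.
Lemma isd_id x : is_derive (fun t : R => t) x 1.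
Proof. exact (@is_derive_id R_AbsRing x). Qed.

Lemma Kgrad W c x y a b : loc_variational W c -> W x y ->
  is_derive (fun s => Kx c x y s b) a (Bxx c x y a b) /\
  is_derive (fun s => Kx c x y a s) b (Bxy c x y a b) /\
  is_derive (fun s => Ky c x y s b) a (Bxy c x y a b) /\
  is_derive (fun s => Ky c x y a s) b (Byy c x y a b).
Proof.
  intros [[sAx [sAy [sBxx [sBxy sByy]]]] Hh] Hw.
  unfold Kx, Ky. split; [|split; [|split]].
  - replace (Bxx c x y a b) with (Bxx c x y a b + 0) by ring.
    apply isd_plus.
    + apply (ftc (fun nu => Bxx c x y nu b)). intros t; apply (cont_a W); auto.
    + apply isd_const.
  - replace (Bxy c x y a b) with ((Bxy c x y a b - Bxy c x y 0 b) + Bxy c x y 0 b) by ring.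
    apply isd_plus.
    + apply (RInt_db W); auto. intros nu. apply (Hh x y nu b Hw).
    + apply (ftc (fun t => Bxy c x y 0 t)). intros t; apply (cont_b W); auto.
  - replace (Bxy c x y a b) with (Bxy c x y a b + 0) by ring.
    apply isd_plus.
    + apply (ftc (fun nu => Bxy c x y nu b)). intros t; apply (cont_a W); auto.
    + apply isd_const.
  - replace (Byy c x y a b) with ((Byy c x y a b - Byy c x y 0 b) + Byy c x y 0 b) by ring.
    apply isd_plus.
    + apply (RInt_db W); auto. intros nu. symmetry. apply (Hh x y nu b Hw).
    + apply (ftc (fun t => Byy c x y 0 t)). intros t; apply (cont_b W); auto.
Qed.

Lemma diffp (g gx gy : R -> R -> R) x y :
 (forall u v, is_derive (fun s => g s v) u (gx u v)) ->
 (forall u v, is_derive (fun s => g u s) v (gy u v)) ->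
 continuity_2d_pt gx x y -> continuity_2d_pt gy x y ->
 differentiable_pt_lim g x y (gx x y) (gy x y).
Proof.
  intros Hx Hy Cx Cy eps.
  destruct (Cx (pos_div_2 eps)) as [d1 H1]; destruct (Cy (pos_div_2 eps)) as [d2 H2].
  assert (Hd : 0 < Rmin d1 d2) by (apply Rmin_pos; apply cond_pos).
  exists (mkposreal _ Hd). simpl. intros u v Hu Hv.
  destruct (MVT_cor4 (fun s => g s v) (fun s => gx s v) x (Rabs (u-x)) (fun c _ => Hx c v) u (Rle_refl _)) as [c1 [E1 B1]].
  destruct (MVT_cor4 (fun s => g x s) (fun s => gy x s) y (Rabs (v-y)) (fun c _ => Hy x c) v (Rle_refl _)) as [c2 [E2 B2]].
  simpl in E1, E2.
  assert (Hu1 : Rabs (u - x) < d1) by (eapply Rlt_le_trans; [exact Hu| apply Rmin_l]).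
  assert (Hv1 : Rabs (v - y) < d1) by (eapply Rlt_le_trans; [exact Hv| apply Rmin_l]).
  assert (Hu2 : Rabs (u - x) < d2) by (eapply Rlt_le_trans; [exact Hu| apply Rmin_r]).
  assert (Hv2 : Rabs (v - y) < d2) by (eapply Rlt_le_trans; [exact Hv| apply Rmin_r]).
  assert (K1 : Rabs (gx c1 v - gx x y) < eps / 2).
  { apply (H1 c1 v); [eapply Rle_lt_trans; eauto | auto]. }
  assert (K2 : Rabs (gy x c2 - gy x y) < eps / 2).
  { apply (H2 x c2); [rewrite Rminus_diag, Rabs_R0; apply cond_pos | eapply Rle_lt_trans; eauto]. }
  replace (g u v - g x y - (gx x y * (u - x) + gy x y * (v - y)))
    with ((gx c1 v - gx x y) * (u - x) + (gy x c2 - gy x y) * (v - y))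
    by (rewrite <- (Rplus_0_r (g u v)); lra).
  eapply Rle_trans; [apply Rabs_triang|]. rewrite !Rabs_mult.
  assert (M1 := Rmax_l (Rabs (u - x)) (Rabs (v - y))).
  assert (M2 := Rmax_r (Rabs (u - x)) (Rabs (v - y))).
  assert (P1 := Rabs_pos (u - x)). assert (P2 := Rabs_pos (v - y)).
  assert (P3 := Rabs_pos (gx c1 v - gx x y)). assert (P4 := Rabs_pos (gy x c2 - gy x y)).
  assert (e0 := cond_pos eps).
  apply Rle_trans with (eps / 2 * Rabs (u - x) + eps / 2 * Rabs (v - y)).
  - apply Rplus_le_compat; apply Rmult_le_compat_r; lra.
  - nra.
Qed.

Lemma chain2 (g gx gy : R -> R -> R) (f2 f3 : R -> R) t0 l2 l3 :
 (forall u v, is_derive (fun s => g s v) u (gx u v)) ->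
 (forall u v, is_derive (fun s => g u s) v (gy u v)) ->
 continuity_2d_pt gx (f2 t0) (f3 t0) -> continuity_2d_pt gy (f2 t0) (f3 t0) ->
 is_derive f2 t0 l2 -> is_derive f3 t0 l3 ->
 is_derive (fun t => g (f2 t) (f3 t)) t0 (gx (f2 t0) (f3 t0) * l2 + gy (f2 t0) (f3 t0) * l3).
Proof.
  intros Hx Hy Cx Cy D2 D3. apply is_derive_Reals.
  apply derivable_pt_lim_comp_2d.
  - apply diffp; auto.
  - apply is_derive_Reals; auto.
  - apply is_derive_Reals; auto.
Qed.

Lemma const1 (h : R -> R) : (forall t, is_derive h t 0) -> forall s, h s = h 0.
Proof.
  intros H s. destruct (MVT_cor4 h (fun _ => 0) 0 (Rabs (s - 0)) (fun c _ => H c) s (Rle_refl _)) as [c [E _]].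
  lra.
Qed.

Lemma const2 (G : R -> R -> R) :
  (forall a b, is_derive (fun s => G s b) a 0) -> (forall b, is_derive (fun s => G 0 s) b 0) ->
  forall a b, G a b = G 0 0.
Proof.
  intros H1 H2 a b. rewrite (const1 (fun s => G s b) (fun t => H1 t b) a).
  apply (const1 (fun s => G 0 s) H2 b).
Qed.

Lemma isd_eq (f : R -> R) x l l' : is_derive f x l -> l = l' -> is_derive f x l'.
Proof. intros H <-; auto. Qed.
Lemma lin1 k m t : is_derive (fun s => k * s + m) t k.
Proof. eapply isd_eq. apply isd_plus. apply (isd_mult (fun _ => k) (fun s => s)). apply isd_const. apply isd_id. apply isd_const. simpl. ring. Qed.
Lemma lin2 k m t : is_derive (fun s => m + k * s) t k.
Proof. eapply isd_eq. apply isd_plus. apply isd_const. apply (isd_mult (fun _ => k) (fun s => s)). apply isd_const. apply isd_id. simpl; ring. Qed.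
Lemma isd_scal (f : R -> R) k x l : is_derive f x l -> is_derive (fun s => f s * k) x (l * k).
Proof. intros H. eapply isd_eq. apply (isd_mult f (fun _ => k)). exact H. apply isd_const. simpl; ring. Qed.

Lemma Kcomp W c X Y (f2 f3 : R -> R) t0 l2 l3 : loc_variational W c -> W X Y ->
  is_derive f2 t0 l2 -> is_derive f3 t0 l3 ->
  is_derive (fun t => Kx c X Y (f2 t) (f3 t)) t0
     (Bxx c X Y (f2 t0) (f3 t0) * l2 + Bxy c X Y (f2 t0) (f3 t0) * l3) /\
  is_derive (fun t => Ky c X Y (f2 t) (f3 t)) t0
     (Bxy c X Y (f2 t0) (f3 t0) * l2 + Byy c X Y (f2 t0) (f3 t0) * l3).
Proof.
  intros Hl Hw D2 D3. assert (Hl' := Hl). destruct Hl' as [[_ [_ [sBxx [sBxy sByy]]]] _].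
  split.
  - apply (chain2 (Kx c X Y) (Bxx c X Y) (Bxy c X Y)); auto.
    + intros u v. apply (Kgrad W c X Y u v Hl Hw).
    + intros u v. apply (Kgrad W c X Y u v Hl Hw).
    + apply (cont_ab W); auto.
    + apply (cont_ab W); auto.
  - apply (chain2 (Ky c X Y) (Bxy c X Y) (Byy c X Y)); auto.
    + intros u v. apply (Kgrad W c X Y u v Hl Hw).
    + intros u v. apply (Kgrad W c X Y u v Hl Hw).
    + apply (cont_ab W); auto.
    + apply (cont_ab W); auto.
Qed.

Lemma Btrans U p1 p2 c1 c2 x y a b : same_source_form U p1 p2 c1 c2 -> U x y ->
    let X := p1 x y in let Y := p2 x y in
    let J11 := d2_x p1 x y in let J12 := d2_y p1 x y in
    let J21 := d2_x p2 x y in let J22 := d2_y p2 x y in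
    let Xd := J11 * a + J12 * b in let Yd := J21 * a + J22 * b in
    let bxx := Bxx c2 X Y Xd Yd in let bxy := Bxy c2 X Y Xd Yd in let byy := Byy c2 X Y Xd Yd in
    Bxx c1 x y a b = (bxx * J11 + bxy * J21) * J11 + (bxy * J11 + byy * J21) * J21 /\
    Bxy c1 x y a b = (bxx * J12 + bxy * J22) * J11 + (bxy * J12 + byy * J22) * J21 /\
    Bxy c1 x y a b = (bxx * J11 + bxy * J21) * J12 + (bxy * J11 + byy * J21) * J22 /\
    Byy c1 x y a b = (bxx * J12 + bxy * J22) * J12 + (bxy * J12 + byy * J22) * J22.
Proof.
  intros Hs Hu.
  assert (E0 := Hs x y a b 0 0 Hu). assert (E1 := Hs x y a b 1 0 Hu). assert (E2 := Hs x y a b 0 1 Hu).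
  cbv zeta in *. unfold eps_x, eps_y in *.
  destruct E0 as [E0x E0y]; destruct E1 as [E1x E1y]; destruct E2 as [E2x E2y].
  repeat split; lra.
Qed.

Lemma K00 c X Y : Kx c X Y 0 0 = 0 /\ Ky c X Y 0 0 = 0.
Proof. unfold Kx, Ky. rewrite !RInt_point. unfold zero; simpl. split; ring. Qed.


Lemma Kg1 W c x y a b : loc_variational W c -> W x y -> is_derive (fun s => Kx c x y s b) a (Bxx c x y a b).
Proof. intros H Hw. exact (proj1 (Kgrad W c x y a b H Hw)). Qed.
Lemma Kg2 W c x y a b : loc_variational W c -> W x y -> is_derive (fun s => Kx c x y a s) b (Bxy c x y a b).
Proof. intros H Hw. exact (proj1 (proj2 (Kgrad W c x y a b H Hw))). Qed.
Lemma Kg3 W c x y a b : loc_variational W c -> W x y -> is_derive (fun s => Ky c x y s b) a (Bxy c x y a b).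
Proof. intros H Hw. exact (proj1 (proj2 (proj2 (Kgrad W c x y a b H Hw)))). Qed.
Lemma Kg4 W c x y a b : loc_variational W c -> W x y -> is_derive (fun s => Ky c x y a s) b (Byy c x y a b).
Proof. intros H Hw. exact (proj2 (proj2 (proj2 (Kgrad W c x y a b H Hw)))). Qed.

Lemma kappa_part U V p1 p2 q1 q2 c1 c2 :
  is_diffeo U V p1 p2 q1 q2 -> loc_variational U c1 -> loc_variational V c2 ->
  same_source_form U p1 p2 c1 c2 ->
  (forall x y a b, U x y ->
     let X := p1 x y in let Y := p2 x y in
     let J11 := d2_x p1 x y in let J12 := d2_y p1 x y in
     let J21 := d2_x p2 x y in let J22 := d2_y p2 x y in
     let Xd := J11 * a + J12 * b in let Yd := J21 * a + J22 * b in
     Kx c1 x y a b = Kx c2 X Y Xd Yd * J11 + Ky c2 X Y Xd Yd * J21 /\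
     Ky c1 x y a b = Kx c2 X Y Xd Yd * J12 + Ky c2 X Y Xd Yd * J22).
Proof.
  intros Hd H1 H2 Hs x y a b Hu. cbv zeta.
  assert (HV : V (p1 x y) (p2 x y)).
  { destruct Hd as [_ [_ [_ [_ [_ [_ [Hm _]]]]]]]. apply (Hm x y Hu). }
  assert (HB := fun a b => Btrans U p1 p2 c1 c2 x y a b Hs Hu). cbv zeta in HB.
  set (X := p1 x y) in *. set (Y := p2 x y) in *.
  set (j11 := d2_x p1 x y) in *. set (j12 := d2_y p1 x y) in *.
  set (j21 := d2_x p2 x y) in *. set (j22 := d2_y p2 x y) in *.
  pose (G1 := fun a b => Kx c1 x y a b - (Kx c2 X Y (j11*a + j12*b) (j21*a+j22*b) * j11
                                         + Ky c2 X Y (j11*a + j12*b) (j21*a+j22*b) * j21)).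
  pose (G2 := fun a b => Ky c1 x y a b - (Kx c2 X Y (j11*a + j12*b) (j21*a+j22*b) * j12
                                         + Ky c2 X Y (j11*a + j12*b) (j21*a+j22*b) * j22)).
  assert (C1 : forall a b, G1 a b = G1 0 0).
  { apply const2.
    - intros a' b'. unfold G1.
      destruct (Kcomp V c2 X Y (fun s => j11 * s + j12 * b') (fun s => j21 * s + j22 * b') a' j11 j21 H2 HV (lin1 _ _ _) (lin1 _ _ _)) as [D1 D2].
      eapply isd_eq. apply isd_minus. apply (Kg1 U c1 x y a' b' H1 Hu).
      apply isd_plus; apply isd_scal; [exact D1 | exact D2].
      destruct (HB a' b') as [E _]. simpl. rewrite E. ring.
    - intros b'. unfold G1.
      destruct (Kcomp V c2 X Y (fun s => j11 * 0 + j12 * s) (fun s => j21 * 0 + j22 * s) b' j12 j22 H2 HV (lin2 _ _ _) (lin2 _ _ _)) as [D1 D2].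
      eapply isd_eq. apply isd_minus. apply (Kg2 U c1 x y 0 b' H1 Hu).
      apply isd_plus; apply isd_scal; [exact D1 | exact D2].
      destruct (HB 0 b') as [_ [E _]]. simpl. rewrite E. ring. }
  assert (C2 : forall a b, G2 a b = G2 0 0).
  { apply const2.
    - intros a' b'. unfold G2.
      destruct (Kcomp V c2 X Y (fun s => j11 * s + j12 * b') (fun s => j21 * s + j22 * b') a' j11 j21 H2 HV (lin1 _ _ _) (lin1 _ _ _)) as [D1 D2].
      eapply isd_eq. apply isd_minus. apply (Kg3 U c1 x y a' b' H1 Hu).
      apply isd_plus; apply isd_scal; [exact D1 | exact D2].
      destruct (HB a' b') as [_ [_ [E _]]]. simpl. rewrite E. ring.
    - intros b'. unfold G2.
      destruct (Kcomp V c2 X Y (fun s => j11 * 0 + j12 * s) (fun s => j21 * 0 + j22 * s) b' j12 j22 H2 HV (lin2 _ _ _) (lin2 _ _ _)) as [D1 D2].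
      eapply isd_eq. apply isd_minus. apply (Kg4 U c1 x y 0 b' H1 Hu).
      apply isd_plus; apply isd_scal; [exact D1 | exact D2].
      destruct (HB 0 b') as [_ [_ [_ E]]]. simpl. rewrite E. ring. }
  assert (Z1 : G1 0 0 = 0).
  { unfold G1. rewrite !Rmult_0_r, !Rplus_0_r.
    destruct (K00 c1 x y) as [E1 E2]. destruct (K00 c2 X Y) as [E3 E4]. rewrite ?E1, ?E2, ?E3, ?E4. ring. }
  assert (Z2 : G2 0 0 = 0).
  { unfold G2. rewrite !Rmult_0_r, !Rplus_0_r.
    destruct (K00 c1 x y) as [E1 E2]. destruct (K00 c2 X Y) as [E3 E4]. rewrite ?E1, ?E2, ?E3, ?E4. ring. }
  specialize (C1 a b). specialize (C2 a b). unfold G1, G2 in *. split; lra.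
Qed.

Lemma comp_gen W f X Y (f2 f3 : R -> R) t0 l2 l3 : smooth4_on W f -> W X Y ->
  is_derive f2 t0 l2 -> is_derive f3 t0 l3 ->
  is_derive (fun t => f X Y (f2 t) (f3 t)) t0
    (d_xd f X Y (f2 t0) (f3 t0) * l2 + d_yd f X Y (f2 t0) (f3 t0) * l3).
Proof.
  intros Hs Hw D2 D3.
  apply (chain2 (f X Y) (d_xd f X Y) (d_yd f X Y)); auto.
  - intros u v. apply Derive_correct. apply (sm_ex W f X Y u v Hs Hw).
  - intros u v. apply Derive_correct. apply (sm_ex W f X Y u v Hs Hw).
  - apply (cont_ab W); auto. apply sm_da; auto.
  - apply (cont_ab W); auto. apply sm_db; auto.
Qed.

Lemma eps_comp W c X Y (f2 f3 Q1 Q2 : R -> R) t0 l2 l3 m1 m2 : loc_variational W c -> W X Y ->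
  is_derive f2 t0 l2 -> is_derive f3 t0 l3 -> is_derive Q1 t0 m1 -> is_derive Q2 t0 m2 ->
  is_derive (fun t => eps_x c X Y (f2 t) (f3 t) (Q1 t) (Q2 t)) t0
   (d_xd (Ax c) X Y (f2 t0) (f3 t0) * l2 + d_yd (Ax c) X Y (f2 t0) (f3 t0) * l3
    + ((d_xd (Bxx c) X Y (f2 t0) (f3 t0) * l2 + d_yd (Bxx c) X Y (f2 t0) (f3 t0) * l3) * Q1 t0
        + Bxx c X Y (f2 t0) (f3 t0) * m1)
    + ((d_xd (Bxy c) X Y (f2 t0) (f3 t0) * l2 + d_yd (Bxy c) X Y (f2 t0) (f3 t0) * l3) * Q2 t0
        + Bxy c X Y (f2 t0) (f3 t0) * m2)) /\
  is_derive (fun t => eps_y c X Y (f2 t) (f3 t) (Q1 t) (Q2 t)) t0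
   (d_xd (Ay c) X Y (f2 t0) (f3 t0) * l2 + d_yd (Ay c) X Y (f2 t0) (f3 t0) * l3
    + ((d_xd (Bxy c) X Y (f2 t0) (f3 t0) * l2 + d_yd (Bxy c) X Y (f2 t0) (f3 t0) * l3) * Q1 t0
        + Bxy c X Y (f2 t0) (f3 t0) * m1)
    + ((d_xd (Byy c) X Y (f2 t0) (f3 t0) * l2 + d_yd (Byy c) X Y (f2 t0) (f3 t0) * l3) * Q2 t0
        + Byy c X Y (f2 t0) (f3 t0) * m2)).
Proof.
  intros [[sAx [sAy [sBxx [sBxy sByy]]]] _] Hw D2 D3 E1 E2. unfold eps_x, eps_y. split.
  - apply isd_plus. apply isd_plus.
    + apply (comp_gen W); auto.
    + apply (isd_mult (fun t => Bxx c X Y (f2 t) (f3 t))); auto. apply (comp_gen W); auto.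
    + apply (isd_mult (fun t => Bxy c X Y (f2 t) (f3 t))); auto. apply (comp_gen W); auto.
  - apply isd_plus. apply isd_plus.
    + apply (comp_gen W); auto.
    + apply (isd_mult (fun t => Bxy c X Y (f2 t) (f3 t))); auto. apply (comp_gen W); auto.
    + apply (isd_mult (fun t => Byy c X Y (f2 t) (f3 t))); auto. apply (comp_gen W); auto.
Qed.

Definition eps_cx W c X Y f2 f3 Q1 Q2 t0 l2 l3 m1 m2 H1 H2 H3 H4 H5 H6 :=
  proj1 (eps_comp W c X Y f2 f3 Q1 Q2 t0 l2 l3 m1 m2 H1 H2 H3 H4 H5 H6).
Definition eps_cy W c X Y f2 f3 Q1 Q2 t0 l2 l3 m1 m2 H1 H2 H3 H4 H5 H6 :=
  proj2 (eps_comp W c X Y f2 f3 Q1 Q2 t0 l2 l3 m1 m2 H1 H2 H3 H4 H5 H6).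

Lemma isd_ext (f g : R -> R) x l : (forall t, f t = g t) -> is_derive f x l -> is_derive g x l.
Proof. apply is_derive_ext. Qed.

Lemma omega_part U V p1 p2 q1 q2 c1 c2 :
  is_diffeo U V p1 p2 q1 q2 -> loc_variational U c1 -> loc_variational V c2 ->
  same_source_form U p1 p2 c1 c2 ->
  (forall x y, U x y ->
     / 2 * Dfun c1 x y 0 0 =
     / 2 * Dfun c2 (p1 x y) (p2 x y) 0 0 *
       (d2_x p1 x y * d2_y p2 x y - d2_y p1 x y * d2_x p2 x y)).
Proof.
  intros Hd H1 H2 Hs x y Hu.
  assert (HV : V (p1 x y) (p2 x y)).
  { destruct Hd as [_ [_ [_ [_ [_ [_ [Hm _]]]]]]]. apply (Hm x y Hu). }
  assert (S := Hs x y). cbv zeta in S.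
  eassert (L1 : is_derive (fun s => Ax c1 x y 0 s) 0 _).
  { eapply isd_ext.
    - intros s. symmetry. etransitivity; [idtac | exact (proj1 (S 0 s 0 0 Hu))]. unfold eps_x; ring.
    - apply isd_plus; apply isd_scal.
      + eapply (eps_cx V); [exact H2 | exact HV | apply lin2 | apply lin2 | auto_derive; [exact I | reflexivity] | auto_derive; [exact I | reflexivity]].
      + eapply (eps_cy V); [exact H2 | exact HV | apply lin2 | apply lin2 | auto_derive; [exact I | reflexivity] | auto_derive; [exact I | reflexivity]]. }
  eassert (L2 : is_derive (fun s => Ay c1 x y s 0) 0 _).
  { eapply isd_ext.
    - intros s. symmetry. etransitivity; [idtac | exact (proj2 (S s 0 0 0 Hu))]. unfold eps_y; ring.
    - apply isd_plus; apply isd_scal.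
      + eapply (eps_cx V); [exact H2 | exact HV | apply lin1 | apply lin1 | auto_derive; [exact I | reflexivity] | auto_derive; [exact I | reflexivity]].
      + eapply (eps_cy V); [exact H2 | exact HV | apply lin1 | apply lin1 | auto_derive; [exact I | reflexivity] | auto_derive; [exact I | reflexivity]]. }
  assert (E1 := (is_derive_unique _ _ _ L1 : d_yd (Ax c1) x y 0 0 = _)).
  assert (E2 := (is_derive_unique _ _ _ L2 : d_xd (Ay c1) x y 0 0 = _)).
  cbv beta in E1, E2.
  repeat rewrite ?Rmult_0_r, ?Rmult_0_l, ?Rplus_0_r, ?Rplus_0_l in E1.
  repeat rewrite ?Rmult_0_r, ?Rmult_0_l, ?Rplus_0_r, ?Rplus_0_l in E2.
  unfold Dfun. rewrite E1, E2. unfold Dfun. ring.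
Qed.

Lemma par_ya W f x y a b : open2 W -> smooth4_on W f -> W x y ->
  is_derive (fun u => RInt (fun nu => f x u nu b) 0 a) y (RInt (fun nu => d_y f x y nu b) 0 a).
Proof.
  intros Ho Hs Hw.
  apply (param (fun z t => f x z t b) (fun u => W x u) y 0 a).
  - apply loc_y; auto.
  - intros u t Hu. apply (sm_ex W f x u t b Hs Hu).
  - intros u t Hu. apply (cont_a W f x u t b Hs Hu).
  - intros t. apply (cont_ya W (d_y f)); auto. apply sm_dy; auto.
Qed.
Lemma par_yb W f x y b : open2 W -> smooth4_on W f -> W x y ->
  is_derive (fun u => RInt (fun s => f x u 0 s) 0 b) y (RInt (fun s => d_y f x y 0 s) 0 b).
Proof.
  intros Ho Hs Hw.
  apply (param (fun z t => f x z 0 t) (fun u => W x u) y 0 b).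
  - apply loc_y; auto.
  - intros u t Hu. apply (sm_ex W f x u 0 t Hs Hu).
  - intros u t Hu. apply (cont_b W f x u 0 t Hs Hu).
  - intros t. apply (cont_yb W (d_y f)); auto. apply sm_dy; auto.
Qed.
Lemma par_xa W f x y a b : open2 W -> smooth4_on W f -> W x y ->
  is_derive (fun u => RInt (fun nu => f u y nu b) 0 a) x (RInt (fun nu => d_x f x y nu b) 0 a).
Proof.
  intros Ho Hs Hw.
  apply (param (fun z t => f z y t b) (fun u => W u y) x 0 a).
  - apply loc_x; auto.
  - intros u t Hu. apply (sm_ex W f u y t b Hs Hu).
  - intros u t Hu. apply (cont_a W f u y t b Hs Hu).
  - intros t. apply (cont_xa W (d_x f)); auto. apply sm_dx; auto.
Qed.
Lemma par_xb W f x y b : open2 W -> smooth4_on W f -> W x y ->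
  is_derive (fun u => RInt (fun s => f u y 0 s) 0 b) x (RInt (fun s => d_x f x y 0 s) 0 b).
Proof.
  intros Ho Hs Hw.
  apply (param (fun z t => f z y 0 t) (fun u => W u y) x 0 b).
  - apply loc_x; auto.
  - intros u t Hu. apply (sm_ex W f u y 0 t Hs Hu).
  - intros u t Hu. apply (cont_b W f u y 0 t Hs Hu).
  - intros t. apply (cont_xb W (d_x f)); auto. apply sm_dx; auto.
Qed.

Lemma RInt00 (g : R -> R -> R) t : is_derive (fun s => RInt (g s) 0 0) t 0.
Proof. apply (isd_ext (fun _ => 0)). intros s. rewrite RInt_point. reflexivity. apply isd_const. Qed.

Lemma dkappa W c x y a b : open2 W -> loc_variational W c -> W x y ->
  d_y (Kx c) x y a b - d_x (Ky c) x y a b = / 2 * Dfun c x y a b - / 2 * Dfun c x y 0 0.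
Proof.
  intros Ho Hl Hw. destruct Hl as [[sAx [sAy [sBxx [sBxy sByy]]]] Hh].
  assert (DY : forall a b, d_y (Kx c) x y a b = RInt (fun nu => d_y (Bxx c) x y nu b) 0 a + RInt (fun s => d_y (Bxy c) x y 0 s) 0 b).
  { intros a' b'. unfold d_y at 1. apply is_derive_unique. unfold Kx.
    apply isd_plus; [apply (par_ya W) | apply (par_yb W)]; auto. }
  assert (DX : forall a b, d_x (Ky c) x y a b = RInt (fun nu => d_x (Bxy c) x y nu b) 0 a + RInt (fun s => d_x (Byy c) x y 0 s) 0 b).
  { intros a' b'. unfold d_x at 1. apply is_derive_unique. unfold Ky.
    apply isd_plus; [apply (par_xa W) | apply (par_xb W)]; auto. }
  assert (DA : forall a b, is_derive (fun s => Dfun c x y s b) a (d_xd (d_yd (Ax c)) x y a b - d_xd (d_xd (Ay c)) x y a b)).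
  { intros a' b'. unfold Dfun. apply isd_minus; apply Derive_correct.
    - apply (sm_ex W _ x y a' b' (sm_db W _ sAx) Hw).
    - apply (sm_ex W _ x y a' b' (sm_da W _ sAy) Hw). }
  assert (DB : forall a b, is_derive (fun s => Dfun c x y a s) b (d_yd (d_yd (Ax c)) x y a b - d_yd (d_xd (Ay c)) x y a b)).
  { intros a' b'. unfold Dfun. apply isd_minus; apply Derive_correct.
    - apply (sm_ex W _ x y a' b' (sm_db W _ sAx) Hw).
    - apply (sm_ex W _ x y a' b' (sm_da W _ sAy) Hw). }
  assert (Hloc_x := loc_x W x y Ho Hw). assert (Hloc_y := loc_y W x y Ho Hw).
  assert (E1 : forall a b, d_yd (d_xd (Ax c)) x y a b = a * d_yd (d_x (Bxx c)) x y a b + d_y (Bxx c) x y a b + b * d_yd (d_y (Bxx c)) x y a b).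
  { intros a' b'. transitivity (Derive (fun s => a' * d_x (Bxx c) x y a' s + s * d_y (Bxx c) x y a' s) b').
    - apply Derive_ext. intros s. destruct (Hh x y a' s Hw) as [_ [_ [H3 _]]]. lra.
    - apply is_derive_unique. auto_derive.
      + destruct (sm_ex W _ x y a' b' (sm_dx W _ sBxx) Hw) as [_ [_ [_ Q1]]].
        destruct (sm_ex W _ x y a' b' (sm_dy W _ sBxx) Hw) as [_ [_ [_ Q2]]]. repeat split; auto.
      + unfold d_yd. ring. }
  assert (E2 : forall a b, d_xd (d_xd (Ay c)) x y a b = 2 * d_x (Bxy c) x y a b + 2 * a * d_xd (d_x (Bxy c)) x y a b + 2 * b * d_xd (d_y (Bxy c)) x y a b - d_xd (d_yd (Ax c)) x y a b).
  { intros a' b'. transitivity (Derive (fun s => 2 * s * d_x (Bxy c) x y s b' + 2 * b' * d_y (Bxy c) x y s b' - d_yd (Ax c) x y s b') a').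
    - apply Derive_ext. intros s. destruct (Hh x y s b' Hw) as [_ [_ [_ [_ [H5 _]]]]]. lra.
    - apply is_derive_unique. auto_derive.
      + destruct (sm_ex W _ x y a' b' (sm_dx W _ sBxy) Hw) as [_ [_ [Q1 _]]].
        destruct (sm_ex W _ x y a' b' (sm_dy W _ sBxy) Hw) as [_ [_ [Q2 _]]].
        destruct (sm_ex W _ x y a' b' (sm_db W _ sAx) Hw) as [_ [_ [Q3 _]]]. repeat split; auto.
      + unfold d_xd. ring. }
  assert (E3 : forall a b, d_xd (d_yd (Ax c)) x y a b = d_yd (d_xd (Ax c)) x y a b).
  { intros; apply (sw_ab W); auto. }
  assert (E4 : forall a b, d_yd (d_x (Bxx c)) x y a b = d_xd (d_x (Bxy c)) x y a b).
  { intros a' b'. rewrite <- (sw_xb W); auto. rewrite <- (sw_xa W); auto.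
    apply Derive_ext_loc. eapply filter_imp; [| exact Hloc_x]. intros u Hu. apply (Hh u y a' b' Hu). }
  assert (E5 : forall a b, d_yd (d_y (Bxx c)) x y a b = d_xd (d_y (Bxy c)) x y a b).
  { intros a' b'. rewrite <- (sw_yb W); auto. rewrite <- (sw_ya W); auto.
    apply Derive_ext_loc. eapply filter_imp; [| exact Hloc_y]. intros u Hu. apply (Hh x u a' b' Hu). }
  assert (E10 : forall a b, d_yd (d_yd (Ax c)) x y a b = 2 * a * d_yd (d_x (Bxy c)) x y a b + 2 * d_y (Bxy c) x y a b + 2 * b * d_yd (d_y (Bxy c)) x y a b - d_yd (d_xd (Ay c)) x y a b).
  { intros a' b'. transitivity (Derive (fun s => 2 * a' * d_x (Bxy c) x y a' s + 2 * s * d_y (Bxy c) x y a' s - d_xd (Ay c) x y a' s) b').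
    - apply Derive_ext. intros s. destruct (Hh x y a' s Hw) as [_ [_ [_ [_ [H5 _]]]]]. lra.
    - apply is_derive_unique. auto_derive.
      + destruct (sm_ex W _ x y a' b' (sm_dx W _ sBxy) Hw) as [_ [_ [_ Q1]]].
        destruct (sm_ex W _ x y a' b' (sm_dy W _ sBxy) Hw) as [_ [_ [_ Q2]]].
        destruct (sm_ex W _ x y a' b' (sm_da W _ sAy) Hw) as [_ [_ [_ Q3]]]. repeat split; auto.
      + unfold d_yd. ring. }

  assert (E11 : forall a b, d_xd (d_yd (Ay c)) x y a b = d_yd (d_xd (Ay c)) x y a b).
  { intros; apply (sw_ab W); auto. }
  assert (E12 : forall a b, d_xd (d_yd (Ay c)) x y a b = d_x (Byy c) x y a b + a * d_xd (d_x (Byy c)) x y a b + b * d_xd (d_y (Byy c)) x y a b).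
  { intros a' b'. transitivity (Derive (fun s => s * d_x (Byy c) x y s b' + b' * d_y (Byy c) x y s b') a').
    - apply Derive_ext. intros s. destruct (Hh x y s b' Hw) as [_ [_ [_ [H4 _]]]]. lra.
    - apply is_derive_unique. auto_derive.
      + destruct (sm_ex W _ x y a' b' (sm_dx W _ sByy) Hw) as [_ [_ [Q1 _]]].
        destruct (sm_ex W _ x y a' b' (sm_dy W _ sByy) Hw) as [_ [_ [Q2 _]]]. repeat split; auto.
      + unfold d_xd. ring. }
  assert (E13 : forall a b, d_yd (d_y (Bxy c)) x y a b = d_xd (d_y (Byy c)) x y a b).
  { intros a' b'. rewrite <- (sw_yb W); auto. rewrite <- (sw_ya W); auto.
    apply Derive_ext_loc. eapply filter_imp; [| exact Hloc_y]. intros u Hu. symmetry. apply (Hh x u a' b' Hu). }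
  pose (F := fun a b => (RInt (fun nu => d_y (Bxx c) x y nu b) 0 a + RInt (fun s => d_y (Bxy c) x y 0 s) 0 b)
     - (RInt (fun nu => d_x (Bxy c) x y nu b) 0 a + RInt (fun s => d_x (Byy c) x y 0 s) 0 b) - / 2 * Dfun c x y a b).
  assert (CF : forall a b, F a b = F 0 0).
  { apply const2.
    - intros a' b'. unfold F. eapply isd_eq.
      + apply isd_minus; [apply isd_minus|].
        * apply isd_plus; [apply ftc | apply isd_const]. intros t; apply (cont_a W); auto; apply sm_dy; auto.
        * apply isd_plus; [apply ftc | apply isd_const]. intros t; apply (cont_a W); auto; apply sm_dx; auto.
        * apply (isd_mult (fun _ => / 2)); [apply isd_const | apply DA].
      + rewrite E2, !E3, E1, E4, E5. match goal with |- ?A = ?B => change (@eq R A B) end. lra.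
    - intros b'. unfold F. eapply isd_eq.
      + apply isd_minus; [apply isd_minus|].
        * apply isd_plus; [apply RInt00 | apply ftc]. intros t; apply (cont_b W); auto; apply sm_dy; auto.
        * apply isd_plus; [apply RInt00 | apply ftc]. intros t; apply (cont_b W); auto; apply sm_dx; auto.
        * apply (isd_mult (fun _ => / 2)); [apply isd_const | apply DB].
      + rewrite E10, <- E11, E12, E13. match goal with |- ?A = ?B => change (@eq R A B) end. lra. }
  rewrite DY, DX. specialize (CF a b). unfold F in CF. rewrite !RInt_point in CF.
  unfold zero in CF; simpl in CF. lra.
Qed.

Theorem theorem3p4
  (U V : R -> R -> Prop) (p1 p2 q1 q2 : R -> R -> R) (c1 c2 : coeffs) :
  is_diffeo U V p1 p2 q1 q2 ->
  loc_variational U c1 ->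
  loc_variational V c2 ->
  same_source_form U p1 p2 c1 c2 ->
  (* omega = 1/2 D(x,y,0,0) dx /\ dy is chart independent *)
  (forall x y, U x y ->
     / 2 * Dfun c1 x y 0 0 =
     / 2 * Dfun c2 (p1 x y) (p2 x y) 0 0 *
       (d2_x p1 x y * d2_y p2 x y - d2_y p1 x y * d2_x p2 x y)) /\
  (* kappa = - Kx dx - Ky dy is chart independent *)
  (forall x y a b, U x y ->
     let X := p1 x y in let Y := p2 x y in
     let J11 := d2_x p1 x y in let J12 := d2_y p1 x y in
     let J21 := d2_x p2 x y in let J22 := d2_y p2 x y in
     let Xd := J11 * a + J12 * b in let Yd := J21 * a + J22 * b in
     Kx c1 x y a b = Kx c2 X Y Xd Yd * J11 + Ky c2 X Y Xd Yd * J21 /\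
     Ky c1 x y a b = Kx c2 X Y Xd Yd * J12 + Ky c2 X Y Xd Yd * J22) /\
  (* alpha' - omega = d kappa in the chart: equality of the dx^dy, dx^dxd,
     dx^dyd, dy^dxd, dy^dyd components (dxd^dyd components are both 0) *)
  (forall x y a b, U x y ->
     d_y (Kx c1) x y a b - d_x (Ky c1) x y a b =
       / 2 * Dfun c1 x y a b - / 2 * Dfun c1 x y 0 0 /\
     d_xd (Kx c1) x y a b = Bxx c1 x y a b /\
     d_yd (Kx c1) x y a b = Bxy c1 x y a b /\
     d_xd (Ky c1) x y a b = Bxy c1 x y a b /\
     d_yd (Ky c1) x y a b = Byy c1 x y a b).
Proof.
  intros Hd H1 H2 Hs.
  split; [exact (omega_part U V p1 p2 q1 q2 c1 c2 Hd H1 H2 Hs) |].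
  split; [exact (kappa_part U V p1 p2 q1 q2 c1 c2 Hd H1 H2 Hs) |].
  intros x y a b Hu.
  assert (Ho : open2 U) by (destruct Hd as [Ho _]; exact Ho).
  split; [exact (dkappa U c1 x y a b Ho H1 Hu) |].
  split; [exact (is_derive_unique _ _ _ (Kg1 U c1 x y a b H1 Hu)) |].
  split; [exact (is_derive_unique _ _ _ (Kg2 U c1 x y a b H1 Hu)) |].
  split; [exact (is_derive_unique _ _ _ (Kg3 U c1 x y a b H1 Hu)) |].
  exact (is_derive_unique _ _ _ (Kg4 U c1 x y a b H1 Hu)).
Qed.
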